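(* Assume $a_{j,j+1}\neq0$ for all $1\le j\le d-1$. Let $2\le i\le d$, let $\omega\subset\mathbb Z^i$ be an orbit of the map $\mathbf l\mapsto\mathbf lA_i^T$ containing some $\mathbf l$ with last coordinate $l_i\ne0$, fix $\mathbf l^{(0)}\in\omega$ and set $\mathbf l^{(k)}=\mathbf l^{(0)}(A_i^T)^k$ for $k\in\mathbb Z$. Let $$\Psi_i^\perp(\mathbf y)=\sum_{\mathbf l\in\omega}c_{\mathbf l}\,e(\mathbf l\cdot\mathbf y),\qquad \mathbf y\in\mathbb T^i,$$ with only finitely many nonzero $c_{\mathbf l}\in\mathbb C$, and let $N\in\mathbb N$ be such that $c_{\mathbf l^{(n)}}=0$ for all $|n|\ge N$. Then $\Psi_i^\perp$ is a smooth coboundary for $T_i$ (i.e. $\Psi_i^\perp=u\circ T_i-u$ for some $C^\infty$ $u:\mathbb T^i\to\mathbb C$) if and only if $$\sum_{k=1}^{N}c_{\mathbf l^{(k)}}\,e\Big(-\sum_{j=0}^{k-1}\mathbf l^{(j)}\cdot\mathbf b_i\Big)+c_{\mathbf l^{(0)}}+\sum_{k=1}^{N-1}c_{\mathbf l^{(-k)}}\,e\Big(\sum_{j=1}^{k}\mathbf l^{(-j)}\cdot\mathbf b_i\Big)=0.$$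
   Context: $e(x)=\exp(2\pi i x)$. Let $d\ge2$, $A=(a_{l,m})$ a $d\times d$ upper triangular unipotent integer matrix, $\mathbf b\in\mathbb T^d$, $T\mathbf x=\mathbf xA+\mathbf b$ on $\mathbb T^d$ uniquely ergodic. For $1\le i\le d$, $A_i=(a_{l,m})_{1\le l,m\le i}$, $\mathbf b_i=(b_1,\dots,b_i)$, and $T_i\mathbf y=\mathbf yA_i+\mathbf b_i$ on $\mathbb T^i$ (row vectors); $A_i^T$ is the transpose of $A_i$. Note the last coordinate $l_i$ is constant along each orbit $\omega$. *)

(* Defs.v *)
From Stdlib Require Import Reals ZArith Lia.
Open Scope R_scope.

(** Vectors in R^n / Z^n are represented as functions [nat -> R] / [nat -> Z];
    only the coordinates [0 .. n-1] are meaningful (0-based indexing: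
    paper's coordinate j corresponds to index j-1). *)

Fixpoint rsum (n : nat) (f : nat -> R) : R :=
  match n with O => 0 | S n' => rsum n' f + f n' end.
Fixpoint zsum (n : nat) (f : nat -> Z) : Z :=
  match n with O => 0%Z | S n' => (zsum n' f + f n')%Z end.

Definition Cplx : Type := (R * R)%type.
Definition C0 : Cplx := (0, 0).
Definition Cadd (z w : Cplx) : Cplx := (fst z + fst w, snd z + snd w).
Definition Csub (z w : Cplx) : Cplx := (fst z - fst w, snd z - snd w).
Definition Cmul (z w : Cplx) : Cplx :=
  (fst z * fst w - snd z * snd w, fst z * snd w + snd z * fst w).
Fixpoint Csum (n : nat) (f : nat -> Cplx) : Cplx :=
  match n with O => C0 | S n' => Cadd (Csum n' f) (f n') end.
Definition e (x : R) : Cplx := (cos (2 * PI * x), sin (2 * PI * x)).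

Definition dot (n : nat) (l : nat -> Z) (y : nat -> R) : R :=
  rsum n (fun m => IZR (l m) * y m).

(** The affine map x |-> x A_n + b_n (row vectors) on R^n, lifting T_n;
    coordinates >= n are left untouched. *)
Definition Tmap (n : nat) (A : nat -> nat -> Z) (b : nat -> R)
  (x : nat -> R) : nat -> R :=
  fun m => if Nat.ltb m n then rsum n (fun l => x l * IZR (A l m)) + b m
           else x m.

Definition upd (y : nat -> R) (j : nat) (t : R) : nat -> R :=
  fun m => if Nat.eqb m j then t else y m.

Definition cont (n : nat) (f : (nat -> R) -> R) : Prop :=
  forall x eps, 0 < eps -> exists delta, 0 < delta /\
    forall y, (forall m, (m < n)%nat -> Rabs (y m - x m) < delta) ->
      Rabs (f y - f x) < eps.

Fixpoint Ck (n : nat) (k : nat) (f : (nat -> R) -> R) : Prop :=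
  match k with
  | O => cont n f
  | S k' => cont n f /\
      forall j, (j < n)%nat -> exists g : (nat -> R) -> R,
        (forall y, derivable_pt_lim (fun t => f (upd y j t)) (y j) (g y)) /\
        Ck n k' g
  end.

Definition smooth (n : nat) (f : (nat -> R) -> R) : Prop :=
  forall k, Ck n k f.

(** A function on the torus T^n = R^n / Z^n: depends only on the first n
    coordinates and is 1-periodic in each of them. *)
Definition torus_fun {X : Type} (n : nat) (u : (nat -> R) -> X) : Prop :=
  (forall y y', (forall m, (m < n)%nat -> y m = y' m) -> u y = u y') /\
  (forall y j, (j < n)%nat -> u (upd y j (y j + 1)) = u y).

(** Unique ergodicity of T on T^n, via Oxtoby's characterization
    (for continuous maps of compact metric spaces): for every continuous
    real function f on T^n, the Birkhoff averages converge uniformly to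
    a constant. *)
Definition uniquely_ergodic (n : nat) (A : nat -> nat -> Z) (b : nat -> R)
  : Prop :=
  forall f : (nat -> R) -> R, torus_fun n f -> cont n f ->
    exists c : R, forall eps, 0 < eps -> exists N : nat,
      forall k : nat, (N <= k)%nat -> (0 < k)%nat -> forall x,
        Rabs (rsum k (fun j => f (Nat.iter j (Tmap n A b) x)) / INR k - c)
          < eps.

Definition smooth_coboundary (n : nat) (A : nat -> nat -> Z) (b : nat -> R)
  (Psi : (nat -> R) -> Cplx) : Prop :=
  exists u : (nat -> R) -> Cplx,
    torus_fun n u /\ smooth n (fun y => fst (u y)) /\
    smooth n (fun y => snd (u y)) /\
    forall y, Psi y = Csub (u (Tmap n A b y)) (u y).

(* Main.v *)
From Coquelicot Require Import Coquelicot.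
Require Import Defs.
From Stdlib Require Import Reals ZArith Lra Lia.
From Stdlib Require Import ClassicalEpsilon.
Open Scope R_scope.


Lemma rsum_ext n f g : (forall m, (m < n)%nat -> f m = g m) -> rsum n f = rsum n g.
Proof. induction n; simpl; intros H; auto. rewrite IHn by (intros; apply H; lia). rewrite H by lia. auto. Qed.

Lemma rsum_plus n f g : rsum n (fun m => f m + g m) = rsum n f + rsum n g.
Proof. induction n; simpl; [ring|rewrite IHn; ring]. Qed.

Lemma rsum_scal n a f : rsum n (fun m => a * f m) = a * rsum n f.
Proof. induction n; simpl; [ring|rewrite IHn; ring]. Qed.

Lemma rsum_const n a : rsum n (fun _ => a) = INR n * a.
Proof. induction n; simpl rsum; [simpl; ring|rewrite IHn, S_INR; ring]. Qed.

Lemma rsum_swap n p f : rsum n (fun a => rsum p (fun b => f a b)) = rsum p (fun b => rsum n (fun a => f a b)).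
Proof. induction n; simpl. rewrite rsum_const; simpl; ring. rewrite IHn, <- rsum_plus. auto. Qed.

Lemma rsum_add n p f : rsum (n + p) f = rsum n f + rsum p (fun j => f (n + j)%nat).
Proof. induction p; simpl. rewrite Nat.add_0_r; ring. rewrite Nat.add_succ_r; simpl; rewrite IHp; ring. Qed.

Lemma rsum_nonneg n f : (forall m, (m < n)%nat -> 0 <= f m) -> 0 <= rsum n f.
Proof. induction n; simpl; intros H. lra. assert (0 <= f n) by (apply H; lia).
 assert (0 <= rsum n f) by (apply IHn; intros; apply H; lia). lra. Qed.

Lemma rsum_upd n (F G : nat -> R) j : (j < n)%nat ->
  rsum n (fun m => if Nat.eqb m j then F m else G m) = rsum n G + (F j - G j).
Proof.
  induction n; intros Hj; [lia|]. simpl.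
  destruct (Nat.eq_dec j n) as [->|Hne].
  - rewrite Nat.eqb_refl. rewrite (rsum_ext n _ G). ring.
    intros m Hm. destruct (Nat.eqb_spec m n); [lia|auto].
  - rewrite IHn by lia. destruct (Nat.eqb_spec n j); [lia|]. ring.
Qed.

Lemma IZR_zsum n f : IZR (zsum n f) = rsum n (fun m => IZR (f m)).
Proof. induction n; simpl; auto. rewrite plus_IZR, IHn; auto. Qed.

Lemma zsum_ext n f g : (forall m, (m < n)%nat -> f m = g m) -> zsum n f = zsum n g.
Proof. induction n; simpl; intros H; auto. rewrite IHn by (intros; apply H; lia). rewrite H by lia. auto. Qed.

Lemma zsum_zero n f : (forall m, (m < n)%nat -> f m = 0%Z) -> zsum n f = 0%Z.
Proof. induction n; simpl; intros H; auto. rewrite IHn by (intros; apply H; lia). rewrite H by lia. auto. Qed.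

Lemma dot_upd n l y j t : (j < n)%nat ->
  dot n l (upd y j t) = dot n l y + IZR (l j) * (t - y j).
Proof.
  intros Hj. unfold dot.
  rewrite (rsum_ext n _ (fun m => if Nat.eqb m j then IZR (l m) * t else IZR (l m) * y m)).
  rewrite rsum_upd by auto. ring.
  intros m _. unfold upd. destruct (Nat.eqb m j); auto.
Qed.

Lemma dot_ext n l y y' : (forall m, (m < n)%nat -> y m = y' m) -> dot n l y = dot n l y'.
Proof. intros H; unfold dot; apply rsum_ext; intros; rewrite H; auto. Qed.

Lemma dot_extl n l l' y : (forall m, (m < n)%nat -> l m = l' m) -> dot n l y = dot n l' y.
Proof. intros H; unfold dot; apply rsum_ext; intros; rewrite H; auto. Qed.

Lemma dot_sub n l l' y : dot n l y - dot n l' y = dot n (fun m => (l m - l' m)%Z) y.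
Proof. unfold dot. induction n; simpl. ring. rewrite <- IHn, minus_IZR. ring. Qed.

Lemma dot_opp n l y : - dot n l y = dot n (fun m => (- l m)%Z) y.
Proof. unfold dot. induction n; simpl. ring. rewrite <- IHn, opp_IZR. ring. Qed.

Definition Cconj (z:Cplx) : Cplx := (fst z, - snd z).
Definition C1 : Cplx := (1,0).
Definition norm2 (z:Cplx) : R := fst z * fst z + snd z * snd z.

Ltac cdes := repeat match goal with z : Cplx |- _ => destruct z end.
Ltac ceq := unfold Cadd, Csub, Cmul, Cconj, C0, C1, norm2; try apply injective_projections; simpl; ring.

Lemma e_add a b : e (a + b) = Cmul (e a) (e b).
Proof. unfold e, Cmul; simpl. rewrite Rmult_plus_distr_l, cos_plus, sin_plus. f_equal; ring. Qed.

Lemma e_0 : e 0 = C1.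
Proof. unfold e, C1. rewrite Rmult_0_r, cos_0, sin_0. auto. Qed.

Lemma e_opp a : e (- a) = Cconj (e a).
Proof. unfold e, Cconj; simpl. replace (2 * PI * - a) with (- (2 * PI * a)) by ring.
 rewrite cos_neg, sin_neg. auto. Qed.

Lemma e_nat a k : e (a + INR k) = e a.
Proof. unfold e. replace (2 * PI * (a + INR k)) with (2 * PI * a + 2 * INR k * PI) by ring.
 rewrite cos_period, sin_period. auto. Qed.

Lemma e_Z a z : e (a + IZR z) = e a.
Proof.
  destruct z as [|p|p]; simpl.
  - rewrite Rplus_0_r; auto.
  - change (IZR (Zpos p)) with (IPR p). rewrite <- INR_IPR. apply e_nat.
  - change (IZR (Zneg p)) with (- IPR p). rewrite <- (e_nat (a + - IPR p) (Pos.to_nat p)), INR_IPR.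
    f_equal. ring.
Qed.

Lemma e_half a : e (a + / 2) = (- fst (e a), - snd (e a)).
Proof. unfold e; simpl. replace (2 * PI * (a + / 2)) with (2 * PI * a + PI) by field.
 rewrite neg_cos, neg_sin. auto. Qed.

Lemma norm2_e a : norm2 (e a) = 1.
Proof. unfold norm2, e; simpl. rewrite <- (sin2_cos2 (2 * PI * a)). unfold Rsqr. ring. Qed.

Lemma e_mul_conj a : Cmul (e a) (Cconj (e a)) = C1.
Proof. pose proof (norm2_e a). unfold norm2 in H. destruct (e a) as [x y]. unfold Cmul, Cconj, C1; simpl in *.
 f_equal; lra. Qed.

Lemma fst_Csum n f : fst (Csum n f) = rsum n (fun m => fst (f m)).
Proof. induction n; simpl; auto. rewrite IHn; auto. Qed.
Lemma snd_Csum n f : snd (Csum n f) = rsum n (fun m => snd (f m)).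
Proof. induction n; simpl; auto. rewrite IHn; auto. Qed.

Lemma Csum_ext n f g : (forall m, (m < n)%nat -> f m = g m) -> Csum n f = Csum n g.
Proof. induction n; simpl; intros H; auto. rewrite IHn by (intros; apply H; lia). rewrite H by lia. auto. Qed.

Lemma Cmul_Csum_l z n f : Cmul z (Csum n f) = Csum n (fun m => Cmul z (f m)).
Proof. induction n; simpl. ceq. rewrite <- IHn. ceq. Qed.
Lemma Cmul_Csum_r z n f : Cmul (Csum n f) z = Csum n (fun m => Cmul (f m) z).
Proof. induction n; simpl. ceq. rewrite <- IHn. ceq. Qed.
Lemma Cconj_Csum n f : Cconj (Csum n f) = Csum n (fun m => Cconj (f m)).
Proof. induction n; simpl. ceq. rewrite <- IHn. ceq. Qed.
Lemma Csub_Csum n f g : Csub (Csum n f) (Csum n g) = Csum n (fun m => Csub (f m) (g m)).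
Proof. induction n; simpl. ceq. rewrite <- IHn. ceq. Qed.
Lemma Cadd_Csum n f g : Cadd (Csum n f) (Csum n g) = Csum n (fun m => Cadd (f m) (g m)).
Proof. induction n; simpl. ceq. rewrite <- IHn. ceq. Qed.
Lemma Csum_shift n f : Csum (S n) f = Cadd (f 0%nat) (Csum n (fun m => f (S m))).
Proof. induction n. simpl. ceq. change (Csum (S (S n)) f) with (Cadd (Csum (S n) f) (f (S n))). rewrite IHn. simpl. ceq. Qed.

Section Lam.
Variable d : nat.
Variable A : nat -> nat -> Z.
Variable b : nat -> R.

Definition IsLim (f : (nat -> R) -> R) (c : R) : Prop :=
  forall eps, 0 < eps -> exists N : nat,
    forall k : nat, (N <= k)%nat -> (0 < k)%nat -> forall x,
      Rabs (rsum k (fun j => f (Nat.iter j (Tmap d A b) x)) / INR k - c) < eps.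

Lemma INR_pos k : (0 < k)%nat -> 0 < INR k.
Proof. intros; apply lt_0_INR; lia. Qed.

Lemma IsLim_uniq f c1 c2 : IsLim f c1 -> IsLim f c2 -> c1 = c2.
Proof.
  intros H1 H2. destruct (Req_dec c1 c2) as [|Hne]; auto.
  assert (Hp : 0 < Rabs (c1 - c2) / 2) by (apply Rdiv_lt_0_compat; [apply Rabs_pos_lt; lra|lra]).
  destruct (H1 _ Hp) as [N1 HN1]. destruct (H2 _ Hp) as [N2 HN2].
  specialize (HN1 (S (N1 + N2)) ltac:(lia) ltac:(lia) (fun _ => 0)).
  specialize (HN2 (S (N1 + N2)) ltac:(lia) ltac:(lia) (fun _ => 0)).
  set (s := rsum _ _ / _) in *. revert HN1 HN2. split_Rabs; lra.
Qed.

Lemma IsLim_ext f g c : (forall y, f y = g y) -> IsLim f c -> IsLim g c.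
Proof. intros E H eps He. destruct (H eps He) as [N HN]. exists N. intros k Hk Hk0 x.
 rewrite (rsum_ext k _ (fun j => f (Nat.iter j (Tmap d A b) x))) by (intros; rewrite E; auto). auto. Qed.

Lemma IsLim_ext' f g c c' : IsLim f c -> (forall y, f y = g y) -> c = c' -> IsLim g c'.
Proof. intros H E <-. eapply IsLim_ext; eauto. Qed.

Lemma IsLim_add f g a c : IsLim f a -> IsLim g c -> IsLim (fun y => f y + g y) (a + c).
Proof.
  intros H1 H2 eps He.
  destruct (H1 (eps/2) ltac:(lra)) as [N1 HN1]. destruct (H2 (eps/2) ltac:(lra)) as [N2 HN2].
  exists (N1 + N2)%nat. intros k Hk Hk0 x. rewrite rsum_plus.
  specialize (HN1 k ltac:(lia) Hk0 x). specialize (HN2 k ltac:(lia) Hk0 x).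
  pose proof (INR_pos k Hk0).
  replace ((rsum k (fun j => f (Nat.iter j (Tmap d A b) x)) + rsum k (fun j => g (Nat.iter j (Tmap d A b) x))) / INR k - (a + c))
   with ((rsum k (fun j => f (Nat.iter j (Tmap d A b) x)) / INR k - a) + (rsum k (fun j => g (Nat.iter j (Tmap d A b) x)) / INR k - c)) by (field; lra).
  revert HN1 HN2. set (u := _ / INR k - a). set (v := _ / INR k - c). split_Rabs; lra.
Qed.

Lemma IsLim_scal r f a : IsLim f a -> IsLim (fun y => r * f y) (r * a).
Proof.
  intros H eps He.
  assert (Hr : 0 < Rabs r + 1) by (pose proof (Rabs_pos r); lra).
  destruct (H (eps / (Rabs r + 1)) ltac:(apply Rdiv_lt_0_compat; lra)) as [N HN].
  exists N. intros k Hk Hk0 x. rewrite rsum_scal. specialize (HN k Hk Hk0 x).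
  pose proof (INR_pos k Hk0).
  replace (r * rsum k (fun j => f (Nat.iter j (Tmap d A b) x)) / INR k - r * a)
   with (r * (rsum k (fun j => f (Nat.iter j (Tmap d A b) x)) / INR k - a)) by (field; lra).
  rewrite Rabs_mult. set (u := Rabs (_ - a)) in *.
  assert (0 <= u) by apply Rabs_pos. pose proof (Rabs_pos r).
  apply Rle_lt_trans with ((Rabs r + 1) * u). nra.
  apply Rmult_lt_reg_r with (/ (Rabs r + 1)). apply Rinv_0_lt_compat; lra.
  replace ((Rabs r + 1) * u * / (Rabs r + 1)) with u by (field; lra). exact HN.
Qed.

Lemma IsLim_const c : IsLim (fun _ => c) c.
Proof. intros eps He. exists 0%nat. intros k _ Hk x. rewrite rsum_const.
 pose proof (INR_pos k Hk). replace (INR k * c / INR k - c) with 0 by (field; lra).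
 rewrite Rabs_R0; lra. Qed.

Lemma IsLim_transfer f g a :
  (forall x, exists x', forall j, g (Nat.iter j (Tmap d A b) x) = f (Nat.iter j (Tmap d A b) x')) ->
  IsLim f a -> IsLim g a.
Proof. intros E H eps He. destruct (H eps He) as [N HN]. exists N. intros k Hk Hk0 x.
 destruct (E x) as [x' Hx']. rewrite (rsum_ext k _ (fun j => f (Nat.iter j (Tmap d A b) x'))) by (intros; auto).
 auto. Qed.

Lemma IsLim_nonneg f a : IsLim f a -> (forall y, 0 <= f y) -> 0 <= a.
Proof.
  intros H Hf. destruct (Rle_or_lt 0 a) as [|Ha]; auto.
  destruct (H (- a) ltac:(lra)) as [N HN]. specialize (HN (S N) ltac:(lia) ltac:(lia) (fun _ => 0)).
  assert (0 <= rsum (S N) (fun j => f (Nat.iter j (Tmap d A b) (fun _ => 0))) / INR (S N)).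
  { apply Rmult_le_pos. apply rsum_nonneg; intros; apply Hf. left; apply Rinv_0_lt_compat, INR_pos; lia. }
  revert HN H0. set (s := _ / _). split_Rabs; lra.
Qed.

Definition LimC (g : (nat -> R) -> Cplx) (z : Cplx) : Prop :=
  IsLim (fun y => fst (g y)) (fst z) /\ IsLim (fun y => snd (g y)) (snd z).

Lemma LimC_uniq g z1 z2 : LimC g z1 -> LimC g z2 -> z1 = z2.
Proof. intros [H1 H2] [H3 H4]. apply injective_projections; eapply IsLim_uniq; eauto. Qed.

Lemma LimC_ext f g z : (forall y, f y = g y) -> LimC f z -> LimC g z.
Proof. intros E [H1 H2]; split; eapply IsLim_ext; eauto; intros; simpl; rewrite E; auto. Qed.

Lemma LimC_add f g z w : LimC f z -> LimC g w -> LimC (fun y => Cadd (f y) (g y)) (Cadd z w).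
Proof. intros [H1 H2] [H3 H4]; split; simpl; apply IsLim_add; auto. Qed.

Lemma LimC_cmul c f z : LimC f z -> LimC (fun y => Cmul c (f y)) (Cmul c z).
Proof. intros [H1 H2]; split; simpl.
 - eapply IsLim_ext'. apply IsLim_add; [apply (IsLim_scal (fst c)); exact H1|apply (IsLim_scal (- snd c)); exact H2].
   intros; simpl; ring. ring.
 - eapply IsLim_ext'. apply IsLim_add; [apply (IsLim_scal (fst c)); exact H2|apply (IsLim_scal (snd c)); exact H1].
   intros; simpl; ring. ring. Qed.

Lemma LimC_conj f z : LimC f z -> LimC (fun y => Cconj (f y)) (Cconj z).
Proof. intros [H1 H2]; split; simpl; auto. apply (IsLim_scal (-1)) in H2.
 eapply IsLim_ext; [|replace (- snd z) with (-1 * snd z) by ring; exact H2]. intros; simpl; ring. Qed.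

Lemma LimC_const c : LimC (fun _ => c) c.
Proof. split; apply IsLim_const. Qed.

Lemma LimC_Csum n (F : nat -> (nat -> R) -> Cplx) (z : nat -> Cplx) :
  (forall m, (m < n)%nat -> LimC (F m) (z m)) -> LimC (fun y => Csum n (fun m => F m y)) (Csum n z).
Proof.
  induction n; intros H; simpl.
  - apply LimC_const.
  - apply LimC_add. apply IHn; intros; apply H; lia. apply H; lia.
Qed.

Lemma LimC_transfer f g a :
  (forall x, exists x', forall j, g (Nat.iter j (Tmap d A b) x) = f (Nat.iter j (Tmap d A b) x')) ->
  LimC f a -> LimC g a.
Proof. intros E [H1 H2]; split; eapply IsLim_transfer; eauto; intros x; destruct (E x) as [x' Hx'];
 exists x'; intros; rewrite Hx'; auto. Qed.

Lemma LimC_T f a : LimC f a -> LimC (fun y => f (Tmap d A b y)) a.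
Proof. apply LimC_transfer. intros x; exists (Tmap d A b x); intros j. rewrite Nat.iter_swap. auto. Qed.

End Lam.

Lemma cont_const n c : cont n (fun _ => c).
Proof. intros x eps He. exists 1; split; [lra|]. intros. rewrite Rminus_diag, Rabs_R0; lra. Qed.

Lemma cont_ext n f g : (forall y, f y = g y) -> cont n f -> cont n g.
Proof. intros E H x eps He. destruct (H x eps He) as [dl [Hd Hy]]. exists dl; split; auto.
 intros y Hm. rewrite <- !E. auto. Qed.

Lemma cont_mono i n f : (i <= n)%nat -> cont i f -> cont n f.
Proof. intros Hin H x eps He. destruct (H x eps He) as [dl [Hd Hy]]. exists dl; split; auto.
 intros y Hm. apply Hy. intros; apply Hm; lia. Qed.

Lemma cont_plus n f g : cont n f -> cont n g -> cont n (fun y => f y + g y).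
Proof.
  intros Hf Hg x eps He.
  destruct (Hf x (eps/2) ltac:(lra)) as [d1 [Hd1 H1]]. destruct (Hg x (eps/2) ltac:(lra)) as [d2 [Hd2 H2]].
  exists (Rmin d1 d2); split. apply Rmin_pos; auto.
  intros y Hm. assert (A1 := H1 y (fun m Hm' => Rlt_le_trans _ _ _ (Hm m Hm') (Rmin_l _ _))).
  assert (A2 := H2 y (fun m Hm' => Rlt_le_trans _ _ _ (Hm m Hm') (Rmin_r _ _))).
  revert A1 A2. split_Rabs; lra.
Qed.

Lemma cont_mult n f g : cont n f -> cont n g -> cont n (fun y => f y * g y).
Proof.
  intros Hf Hg x eps He.
  set (M := Rabs (f x) + Rabs (g x) + 1).
  assert (HM : 0 < M) by (unfold M; pose proof (Rabs_pos (f x)); pose proof (Rabs_pos (g x)); lra).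
  set (e1 := Rmin 1 (eps / (2 * M))).
  assert (He1 : 0 < e1) by (apply Rmin_pos; [lra|apply Rdiv_lt_0_compat; lra]).
  destruct (Hf x e1 He1) as [d1 [Hd1 H1]]. destruct (Hg x e1 He1) as [d2 [Hd2 H2]].
  exists (Rmin d1 d2); split. apply Rmin_pos; auto.
  intros y Hm. assert (A1 := H1 y (fun m Hm' => Rlt_le_trans _ _ _ (Hm m Hm') (Rmin_l _ _))).
  assert (A2 := H2 y (fun m Hm' => Rlt_le_trans _ _ _ (Hm m Hm') (Rmin_r _ _))).
  assert (E1 : e1 <= 1) by apply Rmin_l.
  assert (E2 : e1 <= eps / (2 * M)) by apply Rmin_r.
  assert (E3 : e1 * M <= eps / 2).
  { apply Rle_trans with (eps / (2 * M) * M). apply Rmult_le_compat_r; lra. right; field; lra. }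
  replace (f y * g y - f x * g x) with ((f y - f x) * g y + f x * (g y - g x)) by ring.
  assert (Hgy : Rabs (g y) <= M).
  { unfold M. replace (g y) with (g x + (g y - g x)) by ring.
    eapply Rle_trans. apply Rabs_triang. pose proof (Rabs_pos (f x)). lra. }
  assert (Hfx : Rabs (f x) <= M) by (unfold M; pose proof (Rabs_pos (g x)); lra).
  eapply Rle_lt_trans. apply Rabs_triang. rewrite !Rabs_mult.
  assert (T1 : Rabs (f y - f x) * Rabs (g y) < e1 * M).
  { apply Rle_lt_trans with (Rabs (f y - f x) * M). apply Rmult_le_compat_l; auto. apply Rabs_pos.
    apply Rmult_lt_compat_r; auto. }
  assert (T2 : Rabs (f x) * Rabs (g y - g x) <= M * e1).
  { apply Rmult_le_compat; auto; try apply Rabs_pos; lra. }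
  lra.
Qed.

Lemma cont_scal n r f : cont n f -> cont n (fun y => r * f y).
Proof. intros; apply cont_mult; auto; apply cont_const. Qed.

Lemma cont_lip n f h : cont n f -> (forall u v, Rabs (h u - h v) <= Rabs (u - v)) -> cont n (fun y => h (f y)).
Proof. intros Hf Hh x eps He. destruct (Hf x eps He) as [dl [Hd H]]. exists dl; split; auto.
 intros y Hm. eapply Rle_lt_trans. apply Hh. auto. Qed.

Lemma cos_lip u v : Rabs (cos u - cos v) <= Rabs (u - v).
Proof.
  destruct (MVT_abs cos (fun c => - sin c) v u) as [c [Hc _]].
  intros; apply derivable_pt_lim_cos. rewrite Hc. rewrite Rabs_Ropp.
  pose proof (SIN_bound c). pose proof (Rabs_pos (u - v)).
  assert (Rabs (sin c) <= 1) by (apply Rabs_le; lra). nra.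
Qed.

Lemma sin_lip u v : Rabs (sin u - sin v) <= Rabs (u - v).
Proof.
  destruct (MVT_abs sin cos v u) as [c [Hc _]].
  intros; apply derivable_pt_lim_sin. rewrite Hc.
  pose proof (COS_bound c). pose proof (Rabs_pos (u - v)).
  assert (Rabs (cos c) <= 1) by (apply Rabs_le; lra). nra.
Qed.

Lemma dot_bound n l x y dl : 0 < dl -> (forall m, (m < n)%nat -> Rabs (y m - x m) < dl) ->
  Rabs (dot n l y - dot n l x) <= rsum n (fun m => Rabs (IZR (l m))) * dl.
Proof.
  intros Hd. unfold dot. induction n; simpl; intros H.
  - rewrite Rminus_diag, Rabs_R0; lra.
  - replace (rsum n (fun m => IZR (l m) * y m) + IZR (l n) * y n - (rsum n (fun m => IZR (l m) * x m) + IZR (l n) * x n))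
     with ((rsum n (fun m => IZR (l m) * y m) - rsum n (fun m => IZR (l m) * x m)) + IZR (l n) * (y n - x n)) by ring.
    eapply Rle_trans. apply Rabs_triang. rewrite Rabs_mult.
    assert (IH := IHn (fun m Hm => H m ltac:(lia))).
    assert (Rabs (IZR (l n)) * Rabs (y n - x n) <= Rabs (IZR (l n)) * dl).
    { apply Rmult_le_compat_l. apply Rabs_pos. left; apply H; lia. }
    lra.
Qed.

Lemma cont_dot n l : cont n (dot n l).
Proof.
  intros x eps He. set (K := rsum n (fun m => Rabs (IZR (l m)))).
  assert (HK : 0 <= K) by (apply rsum_nonneg; intros; apply Rabs_pos).
  exists (eps / (K + 1)); split. apply Rdiv_lt_0_compat; lra.
  intros y Hm. eapply Rle_lt_trans. apply dot_bound; [|exact Hm]. apply Rdiv_lt_0_compat; lra.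
  fold K. apply Rlt_le_trans with ((K + 1) * (eps / (K + 1))). apply Rmult_lt_compat_r.
  apply Rdiv_lt_0_compat; lra. lra. right; field; lra.
Qed.

Lemma cont_cos_dot n l a : cont n (fun y => cos (a * dot n l y)).
Proof. apply (cont_lip n (fun y => a * dot n l y) cos). apply cont_scal, cont_dot. apply cos_lip. Qed.
Lemma cont_sin_dot n l a : cont n (fun y => sin (a * dot n l y)).
Proof. apply (cont_lip n (fun y => a * dot n l y) sin). apply cont_scal, cont_dot. apply sin_lip. Qed.

Lemma torus_mono {X : Type} i n (f : (nat -> R) -> X) : (i <= n)%nat -> torus_fun i f -> torus_fun n f.
Proof.
  intros Hin [H1 H2]. split.
  - intros y y' H; apply H1; intros; apply H; lia.
  - intros y j Hj. destruct (Nat.lt_ge_cases j i). apply H2; auto.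
    apply H1. intros m Hm. unfold upd. destruct (Nat.eqb_spec m j); [lia|auto].
Qed.

Lemma torus_map {X Y : Type} n (f : (nat -> R) -> X) (h : X -> Y) : torus_fun n f -> torus_fun n (fun y => h (f y)).
Proof. intros [H1 H2]; split; intros. rewrite (H1 y y'); auto. rewrite H2; auto. Qed.

Lemma torus_map2 {X Y W : Type} n (f : (nat -> R) -> X) (g : (nat -> R) -> Y) (h : X -> Y -> W) :
  torus_fun n f -> torus_fun n g -> torus_fun n (fun y => h (f y) (g y)).
Proof. intros [H1 H2] [H3 H4]; split; intros. rewrite (H1 y y'), (H3 y y'); auto. rewrite H2, H4; auto. Qed.

Lemma torus_dot {X : Type} n l (h : R -> X) : (forall x z, h (x + IZR z) = h x) -> torus_fun n (fun y => h (dot n l y)).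
Proof. intros Hh; split; intros. rewrite (dot_ext n l y y'); auto.
 rewrite dot_upd by auto. replace (y j + 1 - y j) with 1 by ring. rewrite Rmult_1_r. apply Hh. Qed.

Lemma torus_e n l : torus_fun n (fun y => e (dot n l y)).
Proof. apply (torus_dot n l e). apply e_Z. Qed.
Lemma torus_e_opp n l : torus_fun n (fun y => e (- dot n l y)).
Proof. apply (torus_dot n l (fun x => e (- x))). intros. rewrite Ropp_plus_distr, <- opp_IZR. apply e_Z. Qed.

Inductive TP (n : nat) : ((nat -> R) -> R) -> Prop :=
| TP0 : TP n (fun _ => 0)
| TPc : forall f a l, TP n f -> TP n (fun y => f y + a * cos (2 * PI * dot n l y))
| TPs : forall f a l, TP n f -> TP n (fun y => f y + a * sin (2 * PI * dot n l y))
| TPext : forall f g, TP n f -> (forall y, f y = g y) -> TP n g.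

Lemma TP_cont n f : TP n f -> cont n f.
Proof.
  induction 1.
  - apply cont_const.
  - apply cont_plus; auto. apply cont_scal. apply cont_cos_dot.
  - apply cont_plus; auto. apply cont_scal. apply cont_sin_dot.
  - eapply cont_ext; eauto.
Qed.

Lemma der_cos a D L t0 : derivable_pt_lim (fun t => a * cos (2*PI*(D + L*(t - t0)))) t0 (a * (- sin (2*PI*D)) * (2*PI*L)).
Proof. apply is_derive_Reals. auto_derive. auto. replace (D + L * (t0 + - t0)) with D by ring. ring. Qed.
Lemma der_sin a D L t0 : derivable_pt_lim (fun t => a * sin (2*PI*(D + L*(t - t0)))) t0 (a * (cos (2*PI*D)) * (2*PI*L)).
Proof. apply is_derive_Reals. auto_derive. auto. replace (D + L * (t0 + - t0)) with D by ring. ring. Qed.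

Lemma dpl_eq f x l l' : derivable_pt_lim f x l -> l = l' -> derivable_pt_lim f x l'.
Proof. intros H <-; auto. Qed.

Lemma TP_deriv n f : TP n f -> forall j, (j < n)%nat -> exists g, TP n g /\
  forall y, derivable_pt_lim (fun t => f (upd y j t)) (y j) (g y).
Proof.
  induction 1; intros j Hj.
  - exists (fun _ => 0). split. constructor. intros; apply derivable_pt_lim_const.
  - destruct (IHTP j Hj) as [g [Hg Hd]].
    exists (fun y => g y + (- (a * 2 * PI * IZR (l j))) * sin (2 * PI * dot n l y)). split. constructor; auto.
    intros y. apply derivable_pt_lim_plus. auto.
    eapply dpl_eq. eapply derivable_pt_lim_ext; [|apply (der_cos a (dot n l y) (IZR (l j)) (y j))].
    intros t. simpl. rewrite dot_upd by auto. auto. ring.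
  - destruct (IHTP j Hj) as [g [Hg Hd]].
    exists (fun y => g y + (a * 2 * PI * IZR (l j)) * cos (2 * PI * dot n l y)). split. constructor; auto.
    intros y. apply derivable_pt_lim_plus. auto.
    eapply dpl_eq. eapply derivable_pt_lim_ext; [|apply (der_sin a (dot n l y) (IZR (l j)) (y j))].
    intros t. simpl. rewrite dot_upd by auto. auto. ring.
  - destruct (IHTP j Hj) as [g0 [Hg Hd]]. exists g0; split; auto. intros y.
    eapply derivable_pt_lim_ext; [|apply Hd]. intros; simpl; auto.
Qed.

Lemma TP_Ck n k : forall f, TP n f -> Ck n k f.
Proof.
  induction k; intros f Hf; simpl.
  - apply TP_cont; auto.
  - split. apply TP_cont; auto. intros j Hj. destruct (TP_deriv n f Hf j Hj) as [g [Hg Hd]].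
    exists g; split; auto.
Qed.

Lemma TP_smooth n f : TP n f -> smooth n f.
Proof. intros H k; apply TP_Ck; auto. Qed.

Definition omega (beta : Z -> R) (k : Z) : R :=
  match k with
  | Z0 => 0
  | Zpos q => - rsum (Pos.to_nat q) (fun j => beta (Z.of_nat j))
  | Zneg q => rsum (Pos.to_nat q) (fun j => beta (- Z.of_nat (S j))%Z)
  end.

Lemma omega_pos beta n : omega beta (Z.of_nat n) = - rsum n (fun j => beta (Z.of_nat j)).
Proof. destruct n. simpl; ring. simpl. rewrite SuccNat2Pos.id_succ. auto. Qed.

Lemma omega_neg beta n : omega beta (- Z.of_nat n)%Z = rsum n (fun j => beta (- Z.of_nat (S j))%Z).
Proof. destruct n. simpl; auto. simpl. rewrite SuccNat2Pos.id_succ. auto. Qed.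

Lemma rsumS n f : rsum (S n) f = rsum n f + f n.
Proof. reflexivity. Qed.

Lemma omega_rel beta k : omega beta (k - 1)%Z = omega beta k + beta (k - 1)%Z.
Proof.
  destruct (Z_lt_le_dec 0 k).
  - assert (exists n, k = Z.of_nat (S n)) as [n ->] by (exists (Z.to_nat (k - 1)); lia).
    replace (Z.of_nat (S n) - 1)%Z with (Z.of_nat n) by lia.
    rewrite !omega_pos. rewrite rsumS. ring.
  - assert (exists n, k = (- Z.of_nat n)%Z) as [n ->] by (exists (Z.to_nat (- k)); lia).
    replace (- Z.of_nat n - 1)%Z with (- Z.of_nat (S n))%Z by lia.
    rewrite !omega_neg. rewrite rsumS. ring.
Qed.

Lemma CsumS n f : Csum (S n) f = Cadd (Csum n f) (f n).
Proof. reflexivity. Qed.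

Section Tele.
Variable beta : Z -> R.
Variable c : Z -> Cplx.
Variable E : Z -> Cplx.
Hypothesis HE : forall k, Csub (E (k - 1)%Z) (E k) = Cmul (c k) (e (omega beta k)).

Lemma tele_pos n : Csum n (fun k' => let k := S k' in Cmul (c (Z.of_nat k))
     (e (- rsum k (fun j => beta (Z.of_nat j))))) = Csub (E 0%Z) (E (Z.of_nat n)).
Proof.
  induction n. simpl. ceq. rewrite CsumS, IHn. cbv beta zeta. rewrite <- (omega_pos beta (S n)). rewrite <- HE.
  replace (Z.of_nat (S n) - 1)%Z with (Z.of_nat n) by lia. ceq.
Qed.

Lemma tele_neg n : Csum n (fun k' => let k := S k' in Cmul (c (- Z.of_nat k)%Z)
     (e (rsum k (fun j => beta (- Z.of_nat (S j))%Z)))) = Csub (E (- Z.of_nat (S n))%Z) (E (-1)%Z).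
Proof.
  induction n. simpl. ceq. rewrite CsumS, IHn. cbv beta zeta. rewrite <- (omega_neg beta (S n)). rewrite <- HE.
  replace (- Z.of_nat (S n) - 1)%Z with (- Z.of_nat (S (S n)))%Z by lia. ceq.
Qed.

Lemma telescope N : (N = 0%nat -> c 0%Z = C0) ->
  Cadd (Cadd
    (Csum N (fun k' => let k := S k' in
       Cmul (c (Z.of_nat k))
            (e (- rsum k (fun j => beta (Z.of_nat j))))))
    (c 0%Z))
    (Csum (N - 1) (fun k' => let k := S k' in
       Cmul (c (- Z.of_nat k)%Z)
            (e (rsum k (fun j => beta (- Z.of_nat (S j))%Z)))))
  = Csub (E (- Z.of_nat N)%Z) (E (Z.of_nat N)).
Proof.
  intros H0. destruct N.
  - simpl. rewrite H0 by auto. ceq.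
  - rewrite tele_pos, tele_neg. replace (S (S N - 1)) with (S N) by lia.
    assert (H := HE 0%Z). simpl omega in H. rewrite e_0 in H. simpl in H.
    assert (Hc : c 0%Z = Csub (E (-1)%Z) (E 0%Z)) by (rewrite H; ceq).
    rewrite Hc. ceq.
Qed.
End Tele.

Section Dyn.
Variable d : nat.
Variable A : nat -> nat -> Z.
Variable b : nat -> R.
Hypothesis Hdiag : forall l, (l < d)%nat -> A l l = 1%Z.
Hypothesis Hlow : forall l m, (l < d)%nat -> (m < l)%nat -> A l m = 0%Z.
Hypothesis Herg : uniquely_ergodic d A b.
Hypothesis Hsup : forall j, (S j < d)%nat -> A j (S j) <> 0%Z.
Variable p : nat.
Local Notation i := (S (S p)).
Hypothesis Hid : (i <= d)%nat.
Variable L : Z -> nat -> Z.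
Hypothesis HL : forall (k : Z) (m : nat), (m < i)%nat ->
          L (k + 1)%Z m = zsum i (fun n => (A m n * L k n)%Z).
Hypothesis Hnz : exists k : Z, L k (S p) <> 0%Z.

Lemma rsum_split_le a n f : (a <= n)%nat -> rsum n f = rsum a f + rsum (n - a) (fun j => f (a + j)%nat).
Proof. intros H. rewrite <- rsum_add. f_equal. lia. Qed.

Lemma rsum_S n f : rsum (S n) f = rsum n f + f n.
Proof. reflexivity. Qed.

Lemma zsum_S n f : zsum (S n) f = (zsum n f + f n)%Z.
Proof. reflexivity. Qed.

Lemma Tmap_dot n k y : (i <= n)%nat -> (n <= d)%nat ->
  dot i (L k) (Tmap n A b y) = dot i (L (k + 1)%Z) y + dot i (L k) b.
Proof.
  intros H1 H2. unfold dot at 1 3.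
  rewrite (rsum_ext i _ (fun m => rsum n (fun l => IZR (L k m) * (y l * IZR (A l m))) + IZR (L k m) * b m)).
  2:{ intros m Hm. unfold Tmap. destruct (Nat.ltb_spec m n); [|lia]. rewrite rsum_scal. ring. }
  rewrite rsum_plus, rsum_swap. f_equal.
  rewrite (rsum_split_le i n) by auto.
  rewrite (rsum_ext (n - i) _ (fun _ => 0)).
  2:{ intros j Hj. rewrite (rsum_ext i _ (fun _ => 0)). rewrite rsum_const; ring.
      intros m Hm. rewrite Hlow by lia. simpl; ring. }
  rewrite rsum_const, Rmult_0_r, Rplus_0_r. unfold dot. apply rsum_ext. intros l Hl.
  rewrite HL by auto. rewrite IZR_zsum. rewrite Rmult_comm, <- rsum_scal. apply rsum_ext. intros m _.
  rewrite mult_IZR. ring.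
Qed.

Lemma Tmap_agree y m : (m < i)%nat -> Tmap i A b y m = Tmap d A b y m.
Proof.
  intros Hm. unfold Tmap. destruct (Nat.ltb_spec m i); [|lia]. destruct (Nat.ltb_spec m d); [|lia].
  f_equal. rewrite (rsum_split_le i d) by auto.
  rewrite (rsum_ext (d - i) _ (fun _ => 0)). rewrite rsum_const; ring.
  intros j Hj. rewrite Hlow by lia. simpl; ring.
Qed.

Definition agree (z z' : nat -> R) := forall m, (m <= p)%nat -> z m = z' m.
Definition Rot (t : R) (z : nat -> R) := upd z p (z p + t).

Lemma T_agree z z' : agree z z' -> agree (Tmap d A b z) (Tmap d A b z').
Proof.
  intros H m Hm. unfold Tmap. destruct (Nat.ltb_spec m d); [|lia]. f_equal. apply rsum_ext.
  intros l Hl. destruct (Nat.le_gt_cases l m). rewrite H by lia; auto. rewrite Hlow by lia. simpl; ring.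
Qed.

Lemma T_Rot t z : agree (Tmap d A b (Rot t z)) (Rot t (Tmap d A b z)).
Proof.
  intros m Hm. unfold Tmap, Rot. destruct (Nat.ltb_spec m d); [|lia].
  rewrite (rsum_ext d _ (fun l => if Nat.eqb l p then (z p + t) * IZR (A l m) else z l * IZR (A l m))).
  2:{ intros l _. unfold upd. destruct (Nat.eqb_spec l p); subst; auto. }
  rewrite rsum_upd by lia. unfold upd. destruct (Nat.eqb_spec m p).
  - subst. destruct (Nat.ltb_spec p d); [|lia]. rewrite Hdiag by lia. simpl. ring.
  - destruct (Nat.ltb_spec m d); [|lia]. rewrite Hlow by lia. simpl. ring.
Qed.

Lemma iter_Rot t x j : agree (Nat.iter j (Tmap d A b) (Rot t x)) (Rot t (Nat.iter j (Tmap d A b) x)).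
Proof.
  induction j; simpl. intros m _; auto.
  intros m Hm. rewrite (T_agree _ _ IHj m Hm). apply T_Rot; auto.
Qed.

Lemma dot_agree (m : nat -> Z) z z' : m (S p) = 0%Z -> agree z z' -> dot i m z = dot i m z'.
Proof.
  intros Hm H. unfold dot. rewrite !(rsum_S (S p)). rewrite Hm. f_equal.
  apply rsum_ext. intros; rewrite H by lia; auto. rewrite Rmult_0_l, Rmult_0_l; auto.
Qed.

Lemma dot_Rot (m : nat -> Z) t z : dot i m (Rot t z) = dot i m z + IZR (m p) * t.
Proof. unfold Rot. rewrite dot_upd by lia. f_equal. f_equal. ring. Qed.

Lemma exist_lim f : torus_fun d f -> cont d f -> exists c, IsLim d A b f c.
Proof. intros H1 H2. destruct (Herg f H1 H2) as [c Hc]. exists c. exact Hc. Qed.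

Lemma lim_anti f c t : IsLim d A b f c ->
  (forall w, f (Rot t w) = - f w) -> (forall z z', agree z z' -> f z = f z') -> c = 0.
Proof.
  intros H HR Ha.
  assert (H1 : IsLim d A b (fun y => - f y) c).
  { eapply IsLim_transfer; [|exact H]. intros x. exists (Rot t x). intros j.
    rewrite (Ha _ _ (iter_Rot t x j)). rewrite HR. auto. }
  assert (H2 := IsLim_scal d A b (-1) f c H).
  assert (H3 : IsLim d A b (fun y => - f y) (-1 * c)) by (eapply IsLim_ext; [|exact H2]; intros; simpl; ring).
  assert (c = -1 * c) by (eapply IsLim_uniq; eauto). lra.
Qed.

Lemma vanish (m : nat -> Z) : m (S p) = 0%Z -> m p <> 0%Z -> LimC d A b (fun y => e (dot i m y)) C0.
Proof.
  intros Hm1 Hm2. set (t := / (2 * IZR (m p))).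
  assert (Hne : IZR (m p) <> 0) by (apply not_0_IZR; auto).
  assert (HR : forall w, e (dot i m (Rot t w)) = (- fst (e (dot i m w)), - snd (e (dot i m w)))).
  { intros w. rewrite dot_Rot. unfold t. replace (IZR (m p) * / (2 * IZR (m p))) with (/2) by (field; auto).
    apply e_half. }
  assert (Ht : forall (h : Cplx -> R), torus_fun d (fun y => h (e (dot i m y)))).
  { intros h. apply (torus_mono i); auto. apply (torus_map i (fun y => e (dot i m y))). apply torus_e. }
  split.
  - destruct (exist_lim (fun y => fst (e (dot i m y)))) as [c Hc]. apply (Ht fst).
    { apply (cont_mono i); auto. eapply cont_ext; [|apply (cont_cos_dot i m (2 * PI))]. intros; unfold e; auto. }
    replace (fst C0) with c; auto. eapply (lim_anti _ _ t); eauto. intros w; cbv beta; rewrite HR; auto.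
    intros z z' Hz; cbv beta; rewrite (dot_agree m z z'); auto.
  - destruct (exist_lim (fun y => snd (e (dot i m y)))) as [c Hc]. apply (Ht snd).
    { apply (cont_mono i); auto. eapply cont_ext; [|apply (cont_sin_dot i m (2 * PI))]. intros; unfold e; auto. }
    replace (snd C0) with c; auto. eapply (lim_anti _ _ t); eauto. intros w; cbv beta; rewrite HR; auto.
    intros z z' Hz; cbv beta; rewrite (dot_agree m z z'); auto.
Qed.

Lemma L_step1 k : L (k + 1)%Z (S p) = L k (S p).
Proof.
  rewrite HL by lia. rewrite !zsum_S. rewrite (zsum_zero p) by (intros; apply Z.mul_eq_0; left; apply Hlow; lia).
  rewrite Hdiag, (Hlow (S p) p) by lia. lia.
Qed.

Lemma L_step2 k : L (k + 1)%Z p = (L k p + A p (S p) * L k (S p))%Z.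
Proof.
  rewrite HL by lia. rewrite !zsum_S. rewrite (zsum_zero p) by (intros; apply Z.mul_eq_0; left; apply Hlow; lia).
  rewrite Hdiag by lia. lia.
Qed.

Lemma L_const k : L k (S p) = L 0%Z (S p).
Proof.
  induction k using Z.peano_ind. auto.
  unfold Z.succ. rewrite L_step1. auto.
  rewrite <- IHk. replace k with (Z.pred k + 1)%Z at 2 by lia. rewrite L_step1. auto.
Qed.

Lemma L_lin k : L k p = (L 0%Z p + k * (A p (S p) * L 0%Z (S p)))%Z.
Proof.
  induction k using Z.peano_ind. lia.
  unfold Z.succ. rewrite L_step2, L_const, IHk. lia.
  assert (E := L_step2 (Z.pred k)). replace (Z.pred k + 1)%Z with k in E by lia.
  rewrite L_const in E. lia.
Qed.

Lemma L_inj j k : j <> k -> L j p <> L k p.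
Proof.
  intros Hjk. rewrite (L_lin j), (L_lin k).
  assert (Ha : A p (S p) <> 0%Z) by (apply Hsup; lia).
  assert (Hl : L 0%Z (S p) <> 0%Z) by (destruct Hnz as [k0 Hk0]; rewrite L_const in Hk0; auto).
  intros E. assert ((j - k) * (A p (S p) * L 0%Z (S p)) = 0)%Z by lia.
  apply Z.mul_eq_0 in H. destruct H. lia. apply Z.mul_eq_0 in H. tauto.
Qed.

Lemma ortho j k : LimC d A b (fun y => e (dot i (L j) y - dot i (L k) y)) (if Z.eqb j k then C1 else C0).
Proof.
  destruct (Z.eqb_spec j k).
  - subst. eapply LimC_ext; [|apply LimC_const]. intros y. simpl. rewrite Rminus_diag, e_0. auto.
  - eapply LimC_ext; [|apply (vanish (fun m => (L j m - L k m)%Z))].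
    intros y. simpl. rewrite dot_sub. auto.
    cbv beta. rewrite (L_const j), (L_const k). lia.
    cbv beta. intros E. apply (L_inj j k n). lia.
Qed.


Lemma Csum_C0 n : Csum n (fun _ => C0) = C0.
Proof. induction n; simpl; auto. rewrite IHn. ceq. Qed.

Lemma Csum_delta n n0 z : Csum n (fun m => if Nat.eqb m n0 then z else C0) = if Nat.ltb n0 n then z else C0.
Proof.
  induction n; simpl. destruct (Nat.ltb_spec n0 0); [lia|auto].
  rewrite IHn. destruct (Nat.eqb_spec n n0); destruct (Nat.ltb_spec n0 n); destruct (Nat.ltb_spec n0 (S n)); subst; try lia; ceq.
Qed.

Variable c : Z -> Cplx.
Variable N : nat.
Hypothesis HN : forall n : Z, (Z.of_nat N <= Z.abs n)%Z -> c n = C0.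

Definition Psi (y : nat -> R) : Cplx := Csum (2 * N + 1)
       (fun n => let k := (Z.of_nat n - Z.of_nat N)%Z in
                 Cmul (c k) (e (dot i (L k) y))).

Lemma Csum_deltaZ K : Csum (2 * N + 1) (fun n => Cmul (c (Z.of_nat n - Z.of_nat N)%Z)
    (if Z.eqb (Z.of_nat n - Z.of_nat N)%Z K then C1 else C0)) = c K.
Proof.
  destruct (Z_le_gt_dec (Z.of_nat N) (Z.abs K)).
  - rewrite (HN K) by auto. transitivity (Csum (2 * N + 1) (fun _ => C0)); [|apply Csum_C0]. apply Csum_ext. intros m Hm.
    destruct (Z.eqb_spec (Z.of_nat m - Z.of_nat N) K) as [Heq|Hneq]. rewrite Heq, HN by auto. ceq. ceq.
  - rewrite (Csum_ext _ _ (fun m => if Nat.eqb m (Z.to_nat (K + Z.of_nat N)) then c K else C0)).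
    rewrite Csum_delta. destruct (Nat.ltb_spec (Z.to_nat (K + Z.of_nat N)) (2 * N + 1)); auto. lia.
    intros m Hm. destruct (Z.eqb_spec (Z.of_nat m - Z.of_nat N) K); destruct (Nat.eqb_spec m (Z.to_nat (K + Z.of_nat N))).
    subst. ceq. lia. lia. ceq.
Qed.

Section Nec.
Variable u : (nat -> R) -> Cplx.
Hypothesis Hut : torus_fun i u.
Hypothesis Hc1 : cont i (fun y => fst (u y)).
Hypothesis Hc2 : cont i (fun y => snd (u y)).
Hypothesis Hcob : forall y, Psi y = Csub (u (Tmap i A b y)) (u y).

Lemma cont_ue1 l : cont i (fun y => fst (Cmul (u y) (e (dot i l y)))).
Proof.
  eapply cont_ext; [|apply cont_plus; [apply (cont_mult _ _ _ Hc1 (cont_cos_dot i l (2*PI)))|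
     apply (cont_scal _ (-1)); apply (cont_mult _ _ _ Hc2 (cont_sin_dot i l (2*PI)))]].
  intros y. unfold Cmul, e; simpl. ring.
Qed.
Lemma cont_ue2 l : cont i (fun y => snd (Cmul (u y) (e (dot i l y)))).
Proof.
  eapply cont_ext; [|apply cont_plus; [apply (cont_mult _ _ _ Hc1 (cont_sin_dot i l (2*PI)))|
     apply (cont_mult _ _ _ Hc2 (cont_cos_dot i l (2*PI)))]].
  intros y. unfold Cmul, e; simpl. ring.
Qed.

Definition g (k : Z) (y : nat -> R) : Cplx := Cmul (u y) (e (- dot i (L k) y)).

Lemma g_alt k y : g k y = Cmul (u y) (e (dot i (fun m => (- L k m)%Z) y)).
Proof. unfold g. rewrite dot_opp. auto. Qed.

Lemma g_lim k : exists D, LimC d A b (g k) D.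
Proof.
  assert (Ht : forall h : Cplx -> R, torus_fun d (fun y => h (g k y))).
  { intros h. apply (torus_mono i); auto. apply (torus_map i (g k)).
    apply (torus_map2 i u (fun y => e (- dot i (L k) y)) Cmul); auto. apply torus_e_opp. }
  destruct (exist_lim (fun y => fst (g k y))) as [D1 H1]. apply Ht.
  { apply (cont_mono i); auto. eapply cont_ext; [|apply (cont_ue1 (fun m => (- L k m)%Z))]. intros; rewrite g_alt; auto. }
  destruct (exist_lim (fun y => snd (g k y))) as [D2 H2]. apply Ht.
  { apply (cont_mono i); auto. eapply cont_ext; [|apply (cont_ue2 (fun m => (- L k m)%Z))]. intros; rewrite g_alt; auto. }
  exists (D1, D2). split; auto.
Qed.

Lemma D_exists : exists D : Z -> Cplx, forall k, LimC d A b (g k) (D k).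
Proof.
  exists (fun k => proj1_sig (constructive_indefinite_description _ (g_lim k))).
  intros k. exact (proj2_sig (constructive_indefinite_description _ (g_lim k))).
Qed.

Lemma u_T y : u (Tmap d A b y) = Cadd (Psi y) (u y).
Proof.
  destruct Hut as [H1 _]. rewrite (H1 _ (Tmap i A b y)). rewrite Hcob. ceq.
  intros m Hm. rewrite Tmap_agree; auto.
Qed.

Lemma Cmul_e_shift be a X : Cmul (e be) (Cmul X (e (- (a + be)))) = Cmul X (e (- a)).
Proof. replace (- a) with (be + - (a + be)) by ring. rewrite (e_add be). ceq. Qed.

Lemma Psi_lim K : LimC d A b (fun y => Cmul (Psi y) (e (- dot i (L K) y))) (c K).
Proof.
  rewrite <- Csum_deltaZ. eapply LimC_ext; [|apply LimC_Csum].
  2:{ intros m Hm. apply LimC_cmul. apply (ortho (Z.of_nat m - Z.of_nat N)%Z K). }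
  intros y. simpl. unfold Psi. rewrite Cmul_Csum_r. apply Csum_ext. intros m Hm.
  unfold Rminus. rewrite (e_add (dot i (L (Z.of_nat m - Z.of_nat N)%Z) y)). ceq.
Qed.

Section WithD.
Variable D : Z -> Cplx.
Hypothesis HD : forall k, LimC d A b (g k) (D k).

Lemma D_rel k : Cmul (D k) (e (dot i (L k) b)) = Cadd (c (k + 1)%Z) (D (k + 1)%Z).
Proof.
  set (h := fun y => Cmul (Cadd (Psi y) (u y)) (e (- dot i (L (k + 1)%Z) y))).
  assert (Ha : LimC d A b h (Cmul (e (dot i (L k) b)) (D k))).
  { eapply LimC_ext; [|apply LimC_cmul; apply LimC_T; apply HD].
    intros y. unfold h, g. simpl. rewrite u_T. rewrite (Tmap_dot d) by auto. apply Cmul_e_shift. }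
  assert (Hb : LimC d A b h (Cadd (c (k + 1)%Z) (D (k + 1)%Z))).
  { eapply LimC_ext; [|apply LimC_add; [apply Psi_lim|apply HD]].
    intros y. unfold h, g. simpl. ceq. }
  rewrite <- (LimC_uniq _ _ _ _ _ _ Ha Hb). ceq.
Qed.

Lemma u2_lim : exists Q, IsLim d A b (fun y => norm2 (u y)) Q.
Proof.
  apply exist_lim.
  - apply (torus_mono i); auto. apply torus_map; auto.
  - apply (cont_mono i); auto. unfold norm2. apply cont_plus; apply cont_mult; auto.
Qed.

Lemma bessel Q (phi : nat -> Z) M : IsLim d A b (fun y => norm2 (u y)) Q ->
  (forall r r', (r < M)%nat -> (r' < M)%nat -> phi r = phi r' -> r = r') ->
  rsum M (fun r => norm2 (D (phi r))) <= Q.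
Proof.
  intros HQ Hphi.
  set (Sm := fun y => Csum M (fun r => Cmul (D (phi r)) (e (dot i (L (phi r)) y)))).
  set (X := rsum M (fun r => norm2 (D (phi r)))).
  assert (H1 : LimC d A b (fun y => Cmul (u y) (Cconj (Sm y))) (Csum M (fun r => Cmul (Cconj (D (phi r))) (D (phi r))))).
  { eapply LimC_ext; [|apply LimC_Csum; intros r _; apply LimC_cmul; apply HD].
    intros y. simpl. unfold Sm. rewrite Cconj_Csum, Cmul_Csum_l. apply Csum_ext. intros r _.
    unfold g. rewrite e_opp. ceq. }
  assert (H2 : LimC d A b (fun y => Cmul (Sm y) (Cconj (Sm y)))
     (Csum M (fun r => Csum M (fun r' => Cmul (Cmul (D (phi r)) (Cconj (D (phi r'))))
         (if Z.eqb (phi r) (phi r') then C1 else C0))))).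
  { eapply LimC_ext; [|apply LimC_Csum; intros r _; apply LimC_Csum; intros r' _; apply LimC_cmul; apply ortho].
    intros y. simpl. unfold Sm. rewrite Cmul_Csum_r. apply Csum_ext. intros r _.
    rewrite Cconj_Csum, Cmul_Csum_l. apply Csum_ext. intros r' _.
    unfold Rminus. rewrite e_add, e_opp. ceq. }
  assert (E2 : Csum M (fun r => Csum M (fun r' => Cmul (Cmul (D (phi r)) (Cconj (D (phi r'))))
         (if Z.eqb (phi r) (phi r') then C1 else C0))) =
         Csum M (fun r => Cmul (Cconj (D (phi r))) (D (phi r)))).
  { apply Csum_ext. intros r Hr.
    rewrite (Csum_ext _ _ (fun r' => if Nat.eqb r' r then Cmul (Cconj (D (phi r))) (D (phi r)) else C0)).
    rewrite Csum_delta. destruct (Nat.ltb_spec r M); [auto|lia].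
    intros r' Hr'. destruct (Z.eqb_spec (phi r) (phi r')) as [Heq|Hneq]; destruct (Nat.eqb_spec r' r).
    subst; ceq. specialize (Hphi r r' Hr Hr' Heq). lia. subst; tauto. ceq. }
  rewrite E2 in H2.
  assert (EX : fst (Csum M (fun r => Cmul (Cconj (D (phi r))) (D (phi r)))) = X).
  { rewrite fst_Csum. unfold X. apply rsum_ext. intros; ceq. }
  destruct H1 as [H1 _]. destruct H2 as [H2 _]. rewrite EX in H1, H2.
  assert (H3 : IsLim d A b (fun y => norm2 (Csub (u y) (Sm y))) (Q + -2 * X + X)).
  { eapply IsLim_ext; [|apply IsLim_add; [apply IsLim_add; [exact HQ|apply IsLim_scal; exact H1]|exact H2]].
    intros y. simpl. ceq. }
  apply IsLim_nonneg in H3. lra. intros y. unfold norm2. nra.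
Qed.

End WithD.

Local Notation beta := (fun j => dot i (L j) b).

Lemma norm2_mul z w : norm2 (Cmul z w) = norm2 z * norm2 w.
Proof. ceq. Qed.

Lemma norm2_zero z : norm2 z = 0 -> z = C0.
Proof. unfold norm2, C0. intros H. destruct z as [x y]; simpl in *.
 assert (x = 0) by nra. assert (y = 0) by nra. subst; auto. Qed.

Lemma norm2_nonneg z : 0 <= norm2 z.
Proof. unfold norm2. nra. Qed.

Lemma const_small Q a : (forall M, INR M * a <= Q) -> 0 <= a -> a = 0.
Proof.
  intros H Ha. destruct Ha as [Ha|]; auto.
  destruct (INR_archimed a Q) as [n Hn]; auto. specialize (H n). lra.
Qed.

Lemma necessity :
  Cadd (Cadd
    (Csum N (fun k' => let k := S k' in
       Cmul (c (Z.of_nat k))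
            (e (- rsum k (fun j => dot i (L (Z.of_nat j)) b)))))
    (c 0%Z))
    (Csum (N - 1) (fun k' => let k := S k' in
       Cmul (c (- Z.of_nat k)%Z)
            (e (rsum k (fun j => dot i (L (- Z.of_nat (S j))%Z) b)))))
  = C0.
Proof.
  destruct D_exists as [D HD]. destruct u2_lim as [Q HQ].
  set (E := fun k => Cmul (D k) (e (omega beta k))).
  assert (HE : forall k, Csub (E (k - 1)%Z) (E k) = Cmul (c k) (e (omega beta k))).
  { intros k. unfold E. rewrite omega_rel, e_add. cbv beta. assert (R := D_rel D HD (k - 1)).
    replace (k - 1 + 1)%Z with k in R by lia.
    transitivity (Csub (Cmul (Cmul (D (k - 1)%Z) (e (dot i (L (k - 1)%Z) b))) (e (omega beta k))) (Cmul (D k) (e (omega beta k)))).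
    ceq. rewrite R. ceq. }
  transitivity (Csub (E (- Z.of_nat N)%Z) (E (Z.of_nat N))).
  { exact (telescope beta c E HE N (fun H0 => HN 0%Z ltac:(subst; simpl; lia))). }
  assert (Hn2 : forall k, norm2 (D k) = norm2 (E k)).
  { intros k. unfold E. rewrite norm2_mul, norm2_e. ring. }
  assert (Hp : forall r, E (Z.of_nat N + Z.of_nat r)%Z = E (Z.of_nat N)).
  { induction r. f_equal; lia. rewrite <- IHr.
    assert (H := HE (Z.of_nat N + Z.of_nat (S r))%Z).
    replace (Z.of_nat N + Z.of_nat (S r) - 1)%Z with (Z.of_nat N + Z.of_nat r)%Z in H by lia.
    rewrite HN in H by lia. 
    transitivity (Csub (E (Z.of_nat N + Z.of_nat r)%Z) (Csub (E (Z.of_nat N + Z.of_nat r)%Z) (E (Z.of_nat N + Z.of_nat (S r))%Z))).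
    ceq. rewrite H. ceq. }
  assert (Hm : forall r, E (- Z.of_nat N - Z.of_nat r)%Z = E (- Z.of_nat N)%Z).
  { induction r. f_equal; lia. rewrite <- IHr.
    assert (H := HE (- Z.of_nat N - Z.of_nat r)%Z).
    replace (- Z.of_nat N - Z.of_nat r - 1)%Z with (- Z.of_nat N - Z.of_nat (S r))%Z in H by lia.
    rewrite HN in H by lia.
    transitivity (Cadd (Csub (E (- Z.of_nat N - Z.of_nat (S r))%Z) (E (- Z.of_nat N - Z.of_nat r)%Z)) (E (- Z.of_nat N - Z.of_nat r)%Z)).
    ceq. rewrite H. ceq. }
  assert (Z1 : E (Z.of_nat N) = C0).
  { apply norm2_zero. apply (const_small Q); [|apply norm2_nonneg]. intros M.
    rewrite <- (rsum_const M).
    rewrite (rsum_ext M _ (fun r => norm2 (D (Z.of_nat N + Z.of_nat r)%Z))).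
    apply (bessel D HD Q (fun r => (Z.of_nat N + Z.of_nat r)%Z) M HQ). intros; lia.
    intros r _. rewrite Hn2, Hp. auto. }
  assert (Z2 : E (- Z.of_nat N)%Z = C0).
  { apply norm2_zero. apply (const_small Q); [|apply norm2_nonneg]. intros M.
    rewrite <- (rsum_const M).
    rewrite (rsum_ext M _ (fun r => norm2 (D (- Z.of_nat N - Z.of_nat r)%Z))).
    apply (bessel D HD Q (fun r => (- Z.of_nat N - Z.of_nat r)%Z) M HQ). intros; lia.
    intros r _. rewrite Hn2, Hm. auto. }
  rewrite Z1, Z2. ceq.
Qed.

End Nec.

Lemma TP_Csum n (Dm : nat -> Cplx) (lm : nat -> nat -> Z) :
  TP i (fun y => fst (Csum n (fun m => Cmul (Dm m) (e (dot i (lm m) y))))) /\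
  TP i (fun y => snd (Csum n (fun m => Cmul (Dm m) (e (dot i (lm m) y))))).
Proof.
  induction n; simpl.
  - split; apply TP0.
  - destruct IHn as [H1 H2]. split.
    + eapply TPext. exact (TPs i _ (- snd (Dm n)) (lm n) (TPc i _ (fst (Dm n)) (lm n) H1)).
      intros y. unfold e. simpl. ring.
    + eapply TPext. exact (TPs i _ (fst (Dm n)) (lm n) (TPc i _ (snd (Dm n)) (lm n) H2)).
      intros y. unfold e. simpl. ring.
Qed.

Lemma torus_Csum n (Dm : nat -> Cplx) (lm : nat -> nat -> Z) :
  torus_fun i (fun y => Csum n (fun m => Cmul (Dm m) (e (dot i (lm m) y)))).
Proof.
  split.
  - intros y y' H. apply Csum_ext. intros m _. rewrite (dot_ext i (lm m) y y'); auto.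
  - intros y j Hj. apply Csum_ext. intros m _. rewrite dot_upd by auto.
    replace (y j + 1 - y j) with 1 by ring. rewrite Rmult_1_r, e_Z. auto.
Qed.

Local Notation beta := (fun j => dot i (L j) b).

Section Suf.
Hypothesis Htarget :
  Cadd (Cadd
    (Csum N (fun k' => let k := S k' in
       Cmul (c (Z.of_nat k))
            (e (- rsum k (fun j => dot i (L (Z.of_nat j)) b)))))
    (c 0%Z))
    (Csum (N - 1) (fun k' => let k := S k' in
       Cmul (c (- Z.of_nat k)%Z)
            (e (rsum k (fun j => dot i (L (- Z.of_nat (S j))%Z) b)))))
  = C0.

Fixpoint Fs (n : nat) : Cplx :=
  match n with
  | O => C0
  | S n' => Csub (Fs n') (Cmul (c (Z.of_nat (S n') - Z.of_nat N)%Z)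
                               (e (omega beta (Z.of_nat (S n') - Z.of_nat N)%Z)))
  end.

Definition Es (k : Z) : Cplx := Fs (Z.to_nat (k + Z.of_nat N)).

Lemma Es_rel k : Csub (Es (k - 1)%Z) (Es k) = Cmul (c k) (e (omega beta k)).
Proof.
  unfold Es. destruct (Z_lt_le_dec 0 (k + Z.of_nat N)).
  - assert (H : Z.to_nat (k + Z.of_nat N) = S (Z.to_nat (k - 1 + Z.of_nat N))) by lia.
    rewrite H. cbn [Fs]. replace (Z.of_nat (S (Z.to_nat (k - 1 + Z.of_nat N))) - Z.of_nat N)%Z with k by lia.
    ceq.
  - replace (Z.to_nat (k + Z.of_nat N)) with 0%nat by lia.
    replace (Z.to_nat (k - 1 + Z.of_nat N)) with 0%nat by lia.
    rewrite HN by lia. simpl. ceq.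
Qed.

Lemma Es_N : Es (Z.of_nat N) = C0.
Proof.
  assert (H := telescope beta c Es Es_rel N (fun H0 => HN 0%Z ltac:(subst; simpl; lia))).
  assert (H' : Csub (Es (- Z.of_nat N)%Z) (Es (Z.of_nat N)) = C0) by (rewrite <- H; exact Htarget).
  unfold Es at 1 in H'. replace (Z.to_nat (- Z.of_nat N + Z.of_nat N)) with 0%nat in H' by lia.
  simpl Fs in H'. unfold Csub, C0 in *. destruct (Es (Z.of_nat N)) as [x y]. simpl in H'.
  injection H' as H1 H2. f_equal; lra.
Qed.

Definition Ds (k : Z) : Cplx := Cmul (Es k) (e (- omega beta k)).

Lemma c_rel k : c k = Csub (Cmul (Ds (k - 1)%Z) (e (dot i (L (k - 1)%Z) b))) (Ds k).
Proof.
  unfold Ds. rewrite omega_rel. cbv beta.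
  replace (- (omega beta k + dot i (L (k - 1)%Z) b)) with (- omega beta k + - dot i (L (k - 1)%Z) b) by ring.
  rewrite e_add.
  transitivity (Cmul (Cmul (c k) (e (omega beta k))) (e (- omega beta k))).
  { rewrite e_opp. assert (H := e_mul_conj (omega beta k)). unfold C1 in H.
    transitivity (Cmul (c k) (Cmul (e (omega beta k)) (Cconj (e (omega beta k))))). rewrite H. ceq. ceq. }
  rewrite <- Es_rel.
  assert (H := e_add (dot i (L (k - 1)%Z) b) (- dot i (L (k - 1)%Z) b)).
  rewrite Rplus_opp_r, e_0 in H.
  transitivity (Csub (Cmul (Cmul (Es (k - 1)%Z) (e (- omega beta k))) C1) (Cmul (Es k) (e (- omega beta k)))).
  ceq. rewrite H. ceq.
Qed.

Definition us (y : nat -> R) : Cplx :=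
  Csum (2 * N + 1) (fun n => Cmul (Ds (Z.of_nat n - Z.of_nat N)%Z) (e (dot i (L (Z.of_nat n - Z.of_nat N)%Z) y))).

Lemma Psi_cob y : Psi y = Csub (us (Tmap i A b y)) (us y).
Proof.
  unfold Psi, us.
  rewrite (Csum_ext _ _ (fun n => Csub
     (Cmul (Cmul (Ds (Z.of_nat n - Z.of_nat N - 1)%Z) (e (dot i (L (Z.of_nat n - Z.of_nat N - 1)%Z) b)))
           (e (dot i (L (Z.of_nat n - Z.of_nat N)%Z) y)))
     (Cmul (Ds (Z.of_nat n - Z.of_nat N)%Z) (e (dot i (L (Z.of_nat n - Z.of_nat N)%Z) y))))).
  2:{ intros m _. cbv zeta. rewrite c_rel. ceq. }
  rewrite <- Csub_Csum. f_equal.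
  replace (2 * N + 1)%nat with (S (2 * N)) by lia.
  rewrite Csum_shift. change (Csum (S (2 * N)) ?f) with (Cadd (Csum (2 * N) f) (f (2 * N)%nat)).
  assert (G0 : Ds (Z.of_nat 0 - Z.of_nat N - 1)%Z = C0).
  { unfold Ds, Es. replace (Z.to_nat (Z.of_nat 0 - Z.of_nat N - 1 + Z.of_nat N)) with 0%nat by lia. simpl Fs. ceq. }
  assert (GN : Ds (Z.of_nat (2 * N) - Z.of_nat N)%Z = C0).
  { unfold Ds. replace (Z.of_nat (2 * N) - Z.of_nat N)%Z with (Z.of_nat N) by lia. rewrite Es_N. ceq. }
  rewrite G0, GN.
  transitivity (Csum (2 * N) (fun m => Cmul (Cmul (Ds (Z.of_nat (S m) - Z.of_nat N - 1)%Z)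
         (e (dot i (L (Z.of_nat (S m) - Z.of_nat N - 1)%Z) b))) (e (dot i (L (Z.of_nat (S m) - Z.of_nat N)%Z) y)))).
  ceq.
  transitivity (Csum (2 * N) (fun m => Cmul (Ds (Z.of_nat m - Z.of_nat N)%Z) (e (dot i (L (Z.of_nat m - Z.of_nat N)%Z) (Tmap i A b y))))).
  2: ceq.
  apply Csum_ext. intros m _.
  replace (Z.of_nat (S m) - Z.of_nat N - 1)%Z with (Z.of_nat m - Z.of_nat N)%Z by lia.
  replace (Z.of_nat (S m) - Z.of_nat N)%Z with (Z.of_nat m - Z.of_nat N + 1)%Z by lia.
  rewrite (Tmap_dot i) by lia. rewrite e_add. ceq.
Qed.

Lemma sufficiency : smooth_coboundary i A b Psi.
Proof.
  exists us. split; [|split; [|split]].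
  - apply torus_Csum.
  - apply TP_smooth. apply (TP_Csum (2 * N + 1) (fun n => Ds (Z.of_nat n - Z.of_nat N)%Z) (fun n => L (Z.of_nat n - Z.of_nat N)%Z)).
  - apply TP_smooth. apply (TP_Csum (2 * N + 1) (fun n => Ds (Z.of_nat n - Z.of_nat N)%Z) (fun n => L (Z.of_nat n - Z.of_nat N)%Z)).
  - apply Psi_cob.
Qed.
End Suf.
End Dyn.

Theorem lemma3p3
  (d : nat) (A : nat -> nat -> Z) (b : nat -> R)
  (Hd : (2 <= d)%nat)
  (Hdiag : forall l, (l < d)%nat -> A l l = 1%Z)
  (Hlow : forall l m, (l < d)%nat -> (m < l)%nat -> A l m = 0%Z)
  (Herg : uniquely_ergodic d A b)
  (Hsup : forall j, (S j < d)%nat -> A j (S j) <> 0%Z)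
  (i : nat) (Hi2 : (2 <= i)%nat) (Hid : (i <= d)%nat)
  (L : Z -> nat -> Z)
  (HL : forall (k : Z) (m : nat), (m < i)%nat ->
          L (k + 1)%Z m = zsum i (fun n => (A m n * L k n)%Z))
  (Hnz : exists k : Z, L k (i - 1)%nat <> 0%Z)
  (c : Z -> Cplx) (N : nat)
  (HN : forall n : Z, (Z.of_nat N <= Z.abs n)%Z -> c n = C0) :
  smooth_coboundary i A b
    (fun y => Csum (2 * N + 1)
       (fun n => let k := (Z.of_nat n - Z.of_nat N)%Z in
                 Cmul (c k) (e (dot i (L k) y))))
  <->
  Cadd (Cadd
    (Csum N (fun k' => let k := S k' in
       Cmul (c (Z.of_nat k))
            (e (- rsum k (fun j => dot i (L (Z.of_nat j)) b)))))
    (c 0%Z))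
    (Csum (N - 1) (fun k' => let k := S k' in
       Cmul (c (- Z.of_nat k)%Z)
            (e (rsum k (fun j => dot i (L (- Z.of_nat (S j))%Z) b)))))
  = C0.
Proof.
  destruct i as [|[|p]]; try lia.
  assert (Hnz' : exists k : Z, L k (S p) <> 0%Z) by exact Hnz.
  split.
  - intros [u [Hut [Hs1 [Hs2 Hcob]]]].
    apply (necessity d A b Hdiag Hlow Herg Hsup p Hid L HL Hnz' c N HN u Hut (Hs1 0%nat) (Hs2 0%nat) Hcob).
  - intros H. eapply sufficiency; eauto.
Qed.
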